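(* Let $n$ be a positive integer, $x\in\Gamma_n$ and $z\in\{r,b\}^n$. Then \[ \tilde\xi_n(x,z)=n-\tfrac12+\tfrac12\,\#_{\mathrm{dl}}(x)+\tfrac12\,W_{\mathrm{tot}}(G_x)-\mathrm{wt}_{G_x}(z). \]
   Context: Let $[n]=\{1,\dots,n\}$. $\Gamma_n$ is the set of words $x=(x_1,\dots,x_{2n})\in[n]^{2n}$ in which every symbol of $[n]$ occurs exactly twice. Colours are formal symbols $r,b$; $\neg$ swaps them, $\neg^0$ is the identity, $\neg^1=\neg$. $[\,\cdot\,]$ is the Iverson bracket. For $f\in\{r,b\}^{2n}$, $\xi_n(f)=\sum_{i=1}^{2n-1}[f_i\neq f_{i+1}]$. For $z\in\{r,b\}^n$, $\mathcal E_n(x,z)_i=\neg^{[x_i\in\{x_1,\dots,x_{i-1}\}]}z_{x_i}$ and $\tilde\xi_n(x,z)=\xi_n(\mathcal E_n(x,z))$. For $i\in[2n-1]$, $\eta(x,i)=[x_{i+1}\in\{x_1,\dots,x_i\}]\oplus[x_i\in\{x_1,\dots,x_{i-1}\}]$. For $e\subseteq[n]$, $\theta_x(e)=-\sum_{i=1}^{2n-1}(-1)^{\eta(x,i)}\delta_{e,\{x_i,x_{i+1}\}}$. The BPSP graph $G_x=(V_x,E_x,W_x)$ has $V_x=[n]$, $E_x=\{\{x_i,x_{i+1}\}: i\in[2n-1],\ x_i\neq x_{i+1},\ \theta_x(\{x_i,x_{i+1}\})\neq0\}$, $W_x=\theta_x|_{E_x}$; $W_{\mathrm{tot}}(G_x)=\sum_{e\in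 E_x}W_x(e)$; $\mathrm{wt}_{G_x}(z)=\sum_{\{i,j\}\in E_x}W_x(\{i,j\})[z_i\neq z_j]$. $\#_{\mathrm{dl}}(x)=|\{i\in[2n-1]:x_i=x_{i+1}\}|$. *)

(* Defs.v *)
(* Positions in words are 0-indexed internally
   (position i here = position i+1 in the paper); symbols are 1..n. *)
From HB Require Import structures.
From mathcomp Require Import all_boot all_order all_algebra.
Set Implicit Arguments. Unset Strict Implicit. Unset Printing Implicit Defensive.
Import Order.TTheory GRing.Theory Num.Theory.

Inductive colour := r | b.
Definition neg (c : colour) : colour := match c with r => b | b => r end.
Definition colour_eqb (c d : colour) : bool :=
  match c, d with r, r | b, b => true | _, _ => false end.
Lemma colour_eqP : Equality.axiom colour_eqb.
Proof. by case; case; constructor. Qed.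
HB.instance Definition _ := hasDecEq.Build colour colour_eqP.

Definition Gamma (n : nat) (x : seq nat) : Prop :=
  size x = 2 * n /\ (forall a, a \in x -> 1 <= a <= n) /\
  (forall a, 1 <= a <= n -> count_mem a x = 2).

Definition xat (x : seq nat) (i : nat) : nat := nth 0 x i.

Definition zat (n : nat) (z : n.-tuple colour) (k : nat) : colour := nth r z k.-1.

Definition seen (x : seq nat) (i : nat) : bool := xat x i \in take i x.

Definition xi (n : nat) (f : seq colour) : nat :=
  \sum_(0 <= i < (2 * n).-1) (nth r f i != nth r f i.+1).

Definition Enc (n : nat) (x : seq nat) (z : n.-tuple colour) : seq colour :=
  [seq (if seen x i then neg (zat z (xat x i)) else zat z (xat x i))
  | i <- iota 0 (2 * n)].

Definition xi_tilde (n : nat) (x : seq nat) (z : n.-tuple colour) : nat :=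
  xi n (Enc x z).

Definition eta (x : seq nat) (i : nat) : bool := seen x i.+1 (+) seen x i.

Definition upair (a c : nat) : nat * nat := (minn a c, maxn a c).

Definition theta (n : nat) (x : seq nat) (e : nat * nat) : int :=
  - \sum_(0 <= i < (2 * n).-1)
      ((-1) ^+ eta x i * (e == upair (xat x i) (xat x i.+1))%:R)%R.

Definition Ex (n : nat) (x : seq nat) : seq (nat * nat) :=
  undup [seq upair (xat x i) (xat x i.+1) | i <- iota 0 (2 * n).-1 &
          (xat x i != xat x i.+1) && (theta n x (upair (xat x i) (xat x i.+1)) != 0%R)].

Definition Wtot (n : nat) (x : seq nat) : int :=
  (\sum_(e <- Ex n x) theta n x e)%R.

Definition wt (n : nat) (x : seq nat) (z : n.-tuple colour) : int :=
  (\sum_(e <- Ex n x) theta n x e * (zat z e.1 != zat z e.2)%:R)%R.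

Definition ndl (n : nat) (x : seq nat) : nat :=
  \sum_(0 <= i < (2 * n).-1) (xat x i == xat x i.+1).

(* Main.v *)
Require Import Defs.
From mathcomp Require Import all_boot all_order all_algebra.
From mathcomp Require Import zify ring lra.
Import Order.TTheory GRing.Theory Num.Theory.
Local Open Scope ring_scope.

Lemma sum_eq_uniq (T : eqType) (L : seq T) (p : T) (g : T -> rat) :
  uniq L -> \sum_(e <- L) (e == p)%:R * g e = (p \in L)%:R * g p.
Proof.
elim: L => [|a L IH] /=; first by rewrite big_nil mul0r.
move=> /andP [aL uL]; rewrite big_cons IH // in_cons.
case: (eqVneq a p) => [<-|ne] /=.
  by rewrite (negbTE aL) mul0r addr0.
by rewrite mul0r add0r.
Qed.

Lemma upair_eq_diag a c d : upair a c = upair d d -> a = c.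
Proof. rewrite /upair => -[]; lia. Qed.

Lemma upair_neq (n : nat) (z : n.-tuple colour) a c :
  (zat z (upair a c).1 != zat z (upair a c).2) = (zat z a != zat z c).
Proof.
rewrite /upair; case: (leqP a c) => h //=.
by rewrite eq_sym.
Qed.

Section K.
Variables (n : nat) (x : seq nat).
Let m := (2 * n).-1.
Let pr i := upair (xat x i) (xat x i.+1).
Let nd i := xat x i != xat x i.+1.

Lemma thetaR e : ((theta n x e)%:~R : rat) =
  - \sum_(0 <= i < m) (-1) ^+ eta x i * (e == pr i)%:R.
Proof.
rewrite /theta rmorphN rmorph_sum; congr (- _); apply: eq_bigr => i _.
by rewrite rmorphM /= rmorphXn rmorphN1 rmorph_nat.
Qed.

Lemma key (h : nat * nat -> rat) :
  \sum_(e <- Ex n x) (theta n x e)%:~R * h e =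
  - \sum_(0 <= i < m) (nd i)%:R * (-1) ^+ eta x i * h (pr i).
Proof.
set L := undup [seq pr i | i <- index_iota 0 m & nd i].
have -> : Ex n x = [seq e <- L | theta n x e != 0].
  rewrite /Ex /L filter_undup filter_map -filter_predI; congr undup.
  rewrite /index_iota subn0; congr map; apply: eq_filter => i /=; by rewrite andbC.
rewrite big_filter big_mkcond /=.
transitivity (\sum_(e <- L) (theta n x e)%:~R * h e).
  apply: eq_bigr => e _; case: ifP => // /negbFE /eqP ->.
  by rewrite mul0r.
apply: etrans (eq_bigr _ (fun e _ => congr1 (fun t => t * h e) (thetaR e))) _.
under eq_bigr => e _ do rewrite mulNr mulr_suml.
rewrite sumrN exchange_big /=; congr (- _); apply: eq_big_seq => i.
rewrite mem_index_iota => /andP [_ im].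
under eq_bigr => e _ do rewrite -mulrA.
rewrite -mulr_sumr sum_eq_uniq ?undup_uniq // mulrA [_ * (_%:R)]mulrC; congr (_ * _ * _).
rewrite mem_undup; congr (_%:R).
congr nat_of_bool; case ndi: (nd i).

  by apply/mapP; exists i => //; rewrite mem_filter ndi mem_index_iota.
apply/negP => /mapP [j]; rewrite mem_filter => /andP [ndj _].
move: ndi; rewrite /nd /pr => /negbFE /eqP ->.
move/esym/upair_eq_diag => /eqP; by rewrite (negbTE ndj).
Qed.
End K.

Lemma dl_seen n x i : Gamma n x -> (i < (2 * n).-1)%N ->
  xat x i = xat x i.+1 -> seen x i = false /\ seen x i.+1 = true.
Proof.
move=> [sz [rng cnt]] im E.
have i1 : (i.+1 < size x)%N by rewrite sz; lia.
have i0 : (i < size x)%N by lia.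
split; last first.
  rewrite /seen -E; apply/(nthP 0); exists i.
    by rewrite size_takel //; lia.
  by rewrite nth_take.
apply/negP => H.
have ax : xat x i \in x by apply: mem_nth.
have := cnt _ (rng _ ax).
have e : count_mem (xat x i) x = (count_mem (xat x i) (take i x) + count_mem (xat x i) (drop i x))%N
  by rewrite -count_cat cat_take_drop.
rewrite e (drop_nth 0 i0) (drop_nth 0 i1) /= -/(xat x i) -/(xat x i.+1) -E eqxx /=.
have : (0 < count_mem (xat x i) (take i x))%N by rewrite -has_count has_pred1.
set c1 := count_mem _ (take _ _); set c2 := count_mem _ (drop _ _) => h1 h2.
have : (c1 + (1 + (1 + c2)) = 2)%N by exact: h2.
lia.
Qed.

Lemma nth_Enc n x (z : n.-tuple colour) i : (i < 2 * n)%N ->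
  nth r (Enc x z) i = if seen x i then neg (zat z (xat x i)) else zat z (xat x i).
Proof. by move=> h; rewrite /Enc (nth_map 0) ?size_iota ?nth_iota. Qed.

Theorem corollary3 (n : nat) (x : seq nat) (z : n.-tuple colour) :
  (0 < n)%N -> Gamma n x ->
  ((xi_tilde x z)%:R : rat) =
    n%:R - 1 / 2 + (ndl n x)%:R / 2 + (Wtot n x)%:~R / 2 - (wt x z)%:~R.
Proof.
move=> n0 G.
set m := (2 * n).-1.
have W : ((Wtot n x)%:~R : rat) = - \sum_(0 <= i < m)
   (xat x i != xat x i.+1)%:R * (-1) ^+ eta x i * 1.
  rewrite /Wtot rmorph_sum -(key _ _ (fun _ => 1)).
  by apply: eq_bigr => e _; rewrite mulr1.
have V : ((wt x z)%:~R : rat) = - \sum_(0 <= i < m)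
   (xat x i != xat x i.+1)%:R * (-1) ^+ eta x i *
   (zat z (xat x i) != zat z (xat x i.+1))%:R.
  rewrite /wt rmorph_sum.
  rewrite (eq_bigr (fun e => (theta n x e)%:~R * ((zat z e.1 != zat z e.2)%:R : rat))); last first.
    by move=> e _; rewrite rmorphM /= rmorph_nat.
  rewrite key; congr (- _); apply: eq_bigr => i _; by rewrite upair_neq.
have N : (n%:R - 1 / 2 : rat) = \sum_(0 <= i < m) (1 / 2).
  rewrite sumr_const_nat.
  have -> : (m - 0 = 2 * n - 1)%N by rewrite /m; lia.
  rewrite -(mulr_natr (1 / 2 : rat) (2 * n - 1)) natrB ?natrM; last by lia.
  lra.
rewrite /xi_tilde /xi /ndl !natr_sum W V N.
transitivity (\sum_(0 <= i < m)
  (1 / 2 + (xat x i == xat x i.+1)%:R / 2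
   - (xat x i != xat x i.+1)%:R * (-1) ^+ eta x i * 1 / 2
   + (xat x i != xat x i.+1)%:R * (-1) ^+ eta x i *
     (zat z (xat x i) != zat z (xat x i.+1))%:R : rat)).
  apply: eq_big_nat => i /andP [_ im].
  have im2 : (i.+1 < 2 * n)%N by rewrite /m in im; lia.
  rewrite !nth_Enc //; last by lia.
  rewrite /eta.
  case: (eqVneq (xat x i) (xat x i.+1)) => E.
    have [-> ->] := dl_seen n x i G im E.
    rewrite -E /=; case: (zat z _) => /=; lra.
  case: (seen x i); case: (seen x i.+1);
    case: (zat z (xat x i)); case: (zat z (xat x i.+1)) => /=;
    rewrite ?expr0 ?expr1; lra.
rewrite !big_split /= sumrN -!mulr_suml.
lra.
Qed.
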